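(* Assume the counit $\epsilon:H\to k$ is an epimorphism in $\mathcal{C}$. For any object $V$ of $\mathcal{C}$, the quadruple $(V,V,V\otimes\epsilon,\mathrm{id}_V)$ (where $V\otimes H\to V\otimes k\cong V$) is a partial $H$-comodule datum, and it is always a geometric partial comodule (the trivial partial comodule structure on $V$). Moreover, the functor $T:\mathcal{C}\to\mathsf{PMod}^H$ assigning to each object its trivial partial comodule structure is fully faithful and is right adjoint to the forgetful functor $U:\mathsf{PMod}^H\to\mathcal{C}$, $U(X,X\bullet H,\pi_X,\rho_X)=X$, $U(f,f\bullet H)=f$.
   Context: $\mathcal{C}$ is a braided monoidal category with tensor $\otimes$, unit object $k$ and right unit isomorphism $r_X:X\to X\otimes k$, having all pushouts, with all functors $-\otimes Y$ and $Y\otimes-$ preserving pushouts. $(H,\Delta,\epsilon)$ is a coalgebra in $\mathcal{C}$. A partial comodule datum is a quadruple $(X,X\bullet H,\pi_X,\rho_X)$ with $\pi_X:X\otimes H\to X\bullet H$ an epimorphism and $\rho_X:X\to X\bullet H$ a morphism. Associated pushouts: $X\bullet k$ (pushout of $\pi_X$ and $X\otimes\epsilon$, legs $X\bullet\epsilon$, $\pi_{X,\epsilon}$); $(X\bullet H)\bullet H$ (pushout of $\pi_X$ and $\rho_X\otimes H$, legs $\rho_X\bullet H$, $\pi_{X\bullet H}:(X\bullet H)\otimes H\to(X\bullet H)\bullet H$); $X\bullet(H\otimes H)$ (pushout of $\pi_X$ and $X\otimes\Delta$, legs $X\bullet\Delta$, $\pi_{X,\Delta}$); $X\bullet(H\bullet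 H)$ (pushout of $\pi_{X,\Delta}$ and $\pi_X\otimes H$, legs $\pi'_X$, $\pi'_{X,\Delta}:(X\bullet H)\otimes H\to X\bullet(H\bullet H)$); $\Theta$ (pushout of $\pi_{X\bullet H}$ and $\pi'_{X,\Delta}$, legs $\theta_1,\theta_2$). Quasi partial comodule: [QPC1] $\pi_{X,\epsilon}$ is an isomorphism and $(X\bullet\epsilon)\rho_X=\pi_{X,\epsilon}r_X$; [QPC2] $\theta_1(\rho_X\bullet H)\rho_X=\theta_2\pi'_X(X\bullet\Delta)\rho_X$. Lax: additionally a morphism $\theta_X:X\bullet(H\bullet H)\to(X\bullet H)\bullet H$ with $\theta_X\pi'_{X,\Delta}=\pi_{X\bullet H}$ exists; geometric: this $\theta_X$ is an isomorphism. A morphism of partial comodule data $X\to Y$ is a pair $(f,f\bullet H)$ with $f:X\to Y$, $f\bullet H:X\bullet H\to Y\bullet H$, $(f\bullet H)\rho_X=\rho_Yf$ and $(f\bullet H)\pi_X=\pi_Y(f\otimes H)$. $\mathsf{PMod}^H$ denotes any one of the full subcategories $\mathsf{qPMod}^H,\mathsf{lPMod}^H,\mathsf{gPMod}^H$ of quasi, lax, geometric partial comodules. *)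

(* Defs.v *)
From Stdlib Require Import ProofIrrelevance.

Set Implicit Arguments.
Unset Strict Implicit.

Record Category := {
  ob :> Type;
  hom : ob -> ob -> Type;
  idm : forall A, hom A A;
  comp : forall A B C, hom B C -> hom A B -> hom A C;
  comp_idl : forall A B (f : hom A B), comp (idm B) f = f;
  comp_idr : forall A B (f : hom A B), comp f (idm A) = f;
  comp_assoc : forall A B C D (f : hom A B) (g : hom B C) (h : hom C D),
      comp h (comp g f) = comp (comp h g) f
}.

Arguments hom {c} A B.
Arguments idm {c} A.
Arguments comp {c A B C} g f.

Declare Scope cat_scope.
Open Scope cat_scope.
Notation "g ∘ f" := (comp g f) (at level 40, left associativity) : cat_scope.

Definition is_iso (C : Category) (A B : C) (f : hom A B) : Prop :=
  exists g : hom B A, g ∘ f = idm A /\ f ∘ g = idm B.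

Definition epi (C : Category) (A B : C) (f : hom A B) : Prop :=
  forall (Z : C) (u v : hom B Z), u ∘ f = v ∘ f -> u = v.

Definition is_pushout (C : Category) (A B C2 P : C)
    (f : hom A B) (g : hom A C2) (p1 : hom B P) (p2 : hom C2 P) : Prop :=
  p1 ∘ f = p2 ∘ g /\
  forall (Z : C) (u : hom B Z) (v : hom C2 Z),
    u ∘ f = v ∘ g -> exists! h : hom P Z, h ∘ p1 = u /\ h ∘ p2 = v.

Record HasPushouts (C : Category) := {
  po : forall (A B C2 : C), hom A B -> hom A C2 -> C;
  po_l : forall (A B C2 : C) (f : hom A B) (g : hom A C2), hom B (po f g);
  po_r : forall (A B C2 : C) (f : hom A B) (g : hom A C2), hom C2 (po f g);
  po_spec : forall (A B C2 : C) (f : hom A B) (g : hom A C2),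
      is_pushout f g (po_l f g) (po_r f g)
}.

Arguments po {C} h {A B C2} f g.
Arguments po_l {C} h {A B C2} f g.
Arguments po_r {C} h {A B C2} f g.

(** * Braided monoidal categories
    Unitors are oriented as in the paper:  r_X : X -> X ⊗ k,  l_X : X -> k ⊗ X;
    the associator is  a_{X,Y,Z} : (X ⊗ Y) ⊗ Z -> X ⊗ (Y ⊗ Z). *)

Record BraidedMonoidalCat := {
  bcat :> Category;
  tens : bcat -> bcat -> bcat;
  tensm : forall (A B C D : bcat), hom A B -> hom C D -> hom (tens A C) (tens B D);
  tensm_id : forall A C, tensm (idm A) (idm C) = idm (tens A C);
  tensm_comp : forall A B E C D F (f : hom A B) (g : hom B E) (f' : hom C D) (g' : hom D F),
      tensm (g ∘ f) (g' ∘ f') = tensm g g' ∘ tensm f f';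
  unitob : bcat;
  assoc : forall X Y Z, hom (tens (tens X Y) Z) (tens X (tens Y Z));
  assocI : forall X Y Z, hom (tens X (tens Y Z)) (tens (tens X Y) Z);
  assoc_inv1 : forall X Y Z, assocI X Y Z ∘ assoc X Y Z = idm _;
  assoc_inv2 : forall X Y Z, assoc X Y Z ∘ assocI X Y Z = idm _;
  assoc_nat : forall X X' Y Y' Z Z' (f : hom X X') (g : hom Y Y') (h : hom Z Z'),
      assoc X' Y' Z' ∘ tensm (tensm f g) h = tensm f (tensm g h) ∘ assoc X Y Z;
  lunit : forall X, hom X (tens unitob X);
  lunitI : forall X, hom (tens unitob X) X;
  lunit_inv1 : forall X, lunitI X ∘ lunit X = idm X;
  lunit_inv2 : forall X, lunit X ∘ lunitI X = idm _;
  lunit_nat : forall X Y (f : hom X Y), lunit Y ∘ f = tensm (idm unitob) f ∘ lunit X;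
  runit : forall X, hom X (tens X unitob);
  runitI : forall X, hom (tens X unitob) X;
  runit_inv1 : forall X, runitI X ∘ runit X = idm X;
  runit_inv2 : forall X, runit X ∘ runitI X = idm _;
  runit_nat : forall X Y (f : hom X Y), runit Y ∘ f = tensm f (idm unitob) ∘ runit X;
  pentagon : forall W X Y Z,
      assoc W X (tens Y Z) ∘ assoc (tens W X) Y Z =
      tensm (idm W) (assoc X Y Z) ∘ assoc W (tens X Y) Z ∘ tensm (assoc W X Y) (idm Z);
  triangle : forall X Y,
      assoc X unitob Y ∘ tensm (runit X) (idm Y) = tensm (idm X) (lunit Y);
  braid : forall X Y, hom (tens X Y) (tens Y X);
  braid_iso : forall X Y, is_iso (braid X Y);
  braid_nat : forall X X' Y Y' (f : hom X X') (g : hom Y Y'),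
      braid X' Y' ∘ tensm f g = tensm g f ∘ braid X Y;
  hexagon1 : forall X Y Z,
      assoc Y Z X ∘ braid X (tens Y Z) ∘ assoc X Y Z =
      tensm (idm Y) (braid X Z) ∘ assoc Y X Z ∘ tensm (braid X Y) (idm Z);
  hexagon2 : forall X Y Z,
      assocI Z X Y ∘ braid (tens X Y) Z ∘ assocI X Y Z =
      tensm (braid X Z) (idm Y) ∘ assocI X Z Y ∘ tensm (idm X) (braid Y Z)
}.

Arguments tens {b} X Y.
Arguments tensm {b A B C D} f g.
Arguments unitob {b}.
Arguments assoc {b} X Y Z.
Arguments assocI {b} X Y Z.
Arguments lunit {b} X.
Arguments lunitI {b} X.
Arguments runit {b} X.
Arguments runitI {b} X.
Arguments braid {b} X Y.

Notation "X ⊗ Y" := (tens X Y) (at level 35, right associativity) : cat_scope.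
Notation "f ⊠ g" := (tensm f g) (at level 35, right associativity) : cat_scope.

Definition tensor_preserves_pushouts (C : BraidedMonoidalCat) : Prop :=
  forall (Y A B C2 P : C) (f : hom A B) (g : hom A C2) (p1 : hom B P) (p2 : hom C2 P),
    is_pushout f g p1 p2 ->
    is_pushout (f ⊠ idm Y) (g ⊠ idm Y) (p1 ⊠ idm Y) (p2 ⊠ idm Y) /\
    is_pushout (idm Y ⊠ f) (idm Y ⊠ g) (idm Y ⊠ p1) (idm Y ⊠ p2).

Record Coalgebra (C : BraidedMonoidalCat) := {
  carrier : C;
  comul : hom carrier (carrier ⊗ carrier);
  counit : hom carrier unitob;
  coassoc : assoc carrier carrier carrier ∘ (comul ⊠ idm carrier) ∘ comul =
            (idm carrier ⊠ comul) ∘ comul;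
  counit_l : (counit ⊠ idm carrier) ∘ comul = lunit carrier;
  counit_r : (idm carrier ⊠ counit) ∘ comul = runit carrier
}.

Arguments carrier {C} c.
Arguments comul {C} c.
Arguments counit {C} c.

Record Functor (C D : Category) := {
  fob :> C -> D;
  fmap : forall A B : C, hom A B -> hom (fob A) (fob B);
  fmap_id : forall A, fmap (idm A) = idm (fob A);
  fmap_comp : forall A B E (f : hom A B) (g : hom B E), fmap (g ∘ f) = fmap g ∘ fmap f
}.

Arguments fmap {C D} _ {A B} _.

Definition bijective_map (A B : Type) (f : A -> B) : Prop :=
  exists g : B -> A, (forall x, g (f x) = x) /\ (forall y, f (g y) = y).

Definition fully_faithful (C D : Category) (F : Functor C D) : Prop :=
  forall A B : C, bijective_map (fun f : hom A B => fmap F f).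

Definition adjunction (C D : Category) (F : Functor C D) (G : Functor D C) : Prop :=
  exists phi : forall (A : C) (B : D), hom (F A) B -> hom A (G B),
    (forall A B, bijective_map (phi A B)) /\
    (forall (A A' : C) (B B' : D) (h : hom A' A) (f : hom (F A) B) (g : hom B B'),
        phi A' B' (g ∘ f ∘ fmap F h) = fmap G g ∘ phi A B f ∘ h).

Section PartialComodules.

Context (C : BraidedMonoidalCat) (PO : HasPushouts C) (H : Coalgebra C).

Local Notation Hc := (carrier H).
Local Notation Δ := (comul H).
Local Notation ε := (counit H).

Record pquad := {
  pX : C;
  pXH : C;
  ppi : hom (pX ⊗ Hc) pXH;
  prho : hom pX pXH
}.

Definition is_pdatum (D : pquad) : Prop := epi (ppi D).

Section Pushouts.
Variable D : pquad.
Local Notation X := (pX D).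
Local Notation XH := (pXH D).
Local Notation piX := (ppi D).
Local Notation rhoX := (prho D).

Definition Xk : C := po PO piX (idm X ⊠ ε).
Definition bullet_eps : hom XH Xk := po_l PO piX (idm X ⊠ ε).
Definition pi_eps : hom (X ⊗ unitob) Xk := po_r PO piX (idm X ⊠ ε).

Definition XHH : C := po PO piX (rhoX ⊠ idm Hc).
Definition rho_bullet : hom XH XHH := po_l PO piX (rhoX ⊠ idm Hc).
Definition pi_XH : hom (XH ⊗ Hc) XHH := po_r PO piX (rhoX ⊠ idm Hc).

Definition XHtH : C := po PO piX (idm X ⊠ Δ).
Definition bullet_Delta : hom XH XHtH := po_l PO piX (idm X ⊠ Δ).
Definition pi_Delta : hom (X ⊗ (Hc ⊗ Hc)) XHtH := po_r PO piX (idm X ⊠ Δ).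

(* X • (H • H): pushout of π_{X,Δ} and π_X ⊗ H, the latter precomposed
   with the associator  X ⊗ (H ⊗ H) ≅ (X ⊗ H) ⊗ H. *)
Definition XHbH : C := po PO pi_Delta ((piX ⊠ idm Hc) ∘ assocI X Hc Hc).
Definition pi' : hom XHtH XHbH := po_l PO pi_Delta ((piX ⊠ idm Hc) ∘ assocI X Hc Hc).
Definition pi'_Delta : hom (XH ⊗ Hc) XHbH :=
  po_r PO pi_Delta ((piX ⊠ idm Hc) ∘ assocI X Hc Hc).

Definition Theta : C := po PO pi_XH pi'_Delta.
Definition theta1 : hom XHH Theta := po_l PO pi_XH pi'_Delta.
Definition theta2 : hom XHbH Theta := po_r PO pi_XH pi'_Delta.

Definition QPC1 : Prop :=
  is_iso pi_eps /\ bullet_eps ∘ rhoX = pi_eps ∘ runit X.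

Definition QPC2 : Prop :=
  theta1 ∘ rho_bullet ∘ rhoX = theta2 ∘ pi' ∘ bullet_Delta ∘ rhoX.

Definition is_quasi : Prop := QPC1 /\ QPC2.

Definition is_lax : Prop :=
  is_quasi /\ exists thetaX : hom XHbH XHH, thetaX ∘ pi'_Delta = pi_XH.

Definition is_geometric : Prop :=
  is_quasi /\ exists thetaX : hom XHbH XHH, thetaX ∘ pi'_Delta = pi_XH /\ is_iso thetaX.

End Pushouts.

Definition is_pmorph (D E : pquad) (f : hom (pX D) (pX E)) (fH : hom (pXH D) (pXH E)) : Prop :=
  fH ∘ prho D = prho E ∘ f /\ fH ∘ ppi D = ppi E ∘ (f ⊠ idm Hc).

Inductive pvariant := Quasi | Lax | Geometric.

Definition pvariant_pred (v : pvariant) (D : pquad) : Prop :=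
  match v with
  | Quasi => is_quasi D
  | Lax => is_lax D
  | Geometric => is_geometric D
  end.

Definition in_PMod (v : pvariant) (D : pquad) : Prop := is_pdatum D /\ pvariant_pred v D.

Definition pmod_ob (v : pvariant) := { D : pquad | in_PMod v D }.

Record pmod_hom (D E : pquad) := {
  ph_f : hom (pX D) (pX E);
  ph_fH : hom (pXH D) (pXH E);
  ph_spec : is_pmorph ph_f ph_fH
}.

Lemma pmod_hom_eq (D E : pquad) (m n : pmod_hom D E) :
  ph_f m = ph_f n -> ph_fH m = ph_fH n -> m = n.
Proof.
  destruct m as [f fH p], n as [g gH q]; simpl; intros -> ->.
  rewrite (proof_irrelevance _ p q); reflexivity.
Qed.

Lemma pmod_id_spec (D : pquad) : is_pmorph (idm (pX D)) (idm (pXH D)).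
Proof.
  split.
  - rewrite comp_idl, comp_idr; reflexivity.
  - rewrite comp_idl, tensm_id, comp_idr; reflexivity.
Qed.

Lemma pmod_comp_spec (D E F : pquad) (g : pmod_hom E F) (f : pmod_hom D E) :
  is_pmorph (ph_f g ∘ ph_f f) (ph_fH g ∘ ph_fH f).
Proof.
  destruct g as [g gH [g1 g2]], f as [f fH [f1 f2]]; simpl; split.
  - rewrite <- comp_assoc, f1, comp_assoc, g1, comp_assoc; reflexivity.
  - rewrite <- comp_assoc, f2, comp_assoc, g2, <- comp_assoc, <- tensm_comp, comp_idl.
    reflexivity.
Qed.

Definition pmod_idm (D : pquad) : pmod_hom D D := Build_pmod_hom (pmod_id_spec D).
Definition pmod_comp (D E F : pquad) (g : pmod_hom E F) (f : pmod_hom D E) : pmod_hom D F :=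
  Build_pmod_hom (pmod_comp_spec g f).

Definition PMod (v : pvariant) : Category.
Proof.
  refine (@Build_Category (pmod_ob v) (fun D E => pmod_hom (proj1_sig D) (proj1_sig E))
            (fun D => pmod_idm (proj1_sig D)) (fun D E F g f => pmod_comp g f) _ _ _);
  intros; apply pmod_hom_eq; simpl;
  first [apply comp_idl | apply comp_idr | apply comp_assoc].
Defined.

Definition forgetU (v : pvariant) : Functor (PMod v) C.
Proof.
  refine (@Build_Functor (PMod v) C (fun D => pX (proj1_sig D))
            (fun D E m => ph_f m) _ _); reflexivity.
Defined.

Definition triv (V : C) : pquad :=
  {| pX := V; pXH := V; ppi := runitI V ∘ (idm V ⊠ ε); prho := idm V |}.

Lemma triv_pmorph (V W : C) (g : hom V W) : is_pmorph (D := triv V) (E := triv W) g g.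
Proof.
  unfold is_pmorph; simpl; split.
  - rewrite comp_idl, comp_idr; reflexivity.
  - assert (Hr : g ∘ runitI V = runitI W ∘ (g ⊠ idm unitob)).
    { transitivity (runitI W ∘ ((g ⊠ idm unitob) ∘ (runit V ∘ runitI V))).
      - rewrite (comp_assoc (runitI V) (runit V) (g ⊠ idm unitob)), <- runit_nat.
        rewrite !comp_assoc, runit_inv1, comp_idl; reflexivity.
      - rewrite runit_inv2, comp_idr; reflexivity. }
    rewrite comp_assoc, Hr, <- !comp_assoc, <- !tensm_comp, !comp_idl, !comp_idr.
    reflexivity.
Qed.

Definition triv_hom (V W : C) (g : hom V W) : pmod_hom (triv V) (triv W) :=
  Build_pmod_hom (triv_pmorph g).

(** Its object part needs that each trivial quadruple lies in
    PMod^H; this is supplied as the argument [hT] (and is itself asserted by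
    the main theorem). *)
Definition trivT (v : pvariant) (hT : forall V : C, in_PMod v (triv V)) : Functor C (PMod v).
Proof.
  refine (@Build_Functor C (PMod v) (fun V => exist _ (triv V) (hT V))
            (fun V W g => triv_hom g) _ _);
  intros; apply pmod_hom_eq; reflexivity.
Defined.

End PartialComodules.

(* Main.v *)
Require Import Defs.
From Stdlib Require Import ProofIrrelevance ClassicalEpsilon.
Set Implicit Arguments.
Unset Strict Implicit.

Lemma po_uniq (Cat : Category) (A B C2 P Z : Cat) (f : hom A B) (g : hom A C2)
  (p1 : hom B P) (p2 : hom C2 P) (h1 h2 : hom P Z) :
  is_pushout f g p1 p2 -> h1 ∘ p1 = h2 ∘ p1 -> h1 ∘ p2 = h2 ∘ p2 -> h1 = h2.
Proof.
  intros [Hc U] E1 E2.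
  destruct (U Z (h2 ∘ p1) (h2 ∘ p2)) as [h [_ Hu]].
  { rewrite <- !comp_assoc, Hc; reflexivity. }
  transitivity h; [symmetry|]; apply Hu; auto.
Qed.

Lemma po_ex (Cat : Category) (A B C2 P Z : Cat) (f : hom A B) (g : hom A C2)
  (p1 : hom B P) (p2 : hom C2 P) (u : hom B Z) (v : hom C2 Z) :
  is_pushout f g p1 p2 -> u ∘ f = v ∘ g -> exists h : hom P Z, h ∘ p1 = u /\ h ∘ p2 = v.
Proof. intros [_ U] E. destruct (U Z u v E) as [h [Hh _]]. eauto. Qed.

Lemma ra2 (Cat : Category) (A B B' X Y : Cat) (x : hom B X) (y : hom A B) (z : hom B' X) (w : hom A B') :
  x ∘ y = z ∘ w -> forall (k : hom Y A), x ∘ (y ∘ k) = z ∘ (w ∘ k).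
Proof. intros E k; rewrite !comp_assoc, E; reflexivity. Qed.
Lemma ra1 (Cat : Category) (A B X Y : Cat) (x : hom B X) (y : hom A B) (z : hom A X) :
  x ∘ y = z -> forall (k : hom Y A), x ∘ (y ∘ k) = z ∘ k.
Proof. intros E k; rewrite !comp_assoc, E; reflexivity. Qed.

Ltac nrm := repeat (rewrite <- comp_assoc || rewrite comp_idl || rewrite comp_idr).
Ltac rw E := first [rewrite E | rewrite (ra2 E) | rewrite (ra1 E)]; nrm.

Section Main.
Variable C : BraidedMonoidalCat.
Variable H : Coalgebra C.
Local Notation Hc := (carrier H).

Lemma runitI_nat (V W : C) (g : hom V W) : g ∘ runitI V = runitI W ∘ (g ⊠ idm unitob).
Proof.
  transitivity (runitI W ∘ ((g ⊠ idm unitob) ∘ (runit V ∘ runitI V))).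
  - rewrite (comp_assoc (runitI V) (runit V) (g ⊠ idm unitob)), <- runit_nat.
    rewrite !comp_assoc, runit_inv1, comp_idl; reflexivity.
  - rewrite runit_inv2, comp_idr; reflexivity.
Qed.

Lemma assocI_nat (X X' Y Y' Z Z' : C) (f : hom X X') (g : hom Y Y') (h : hom Z Z') :
  assocI X' Y' Z' ∘ (f ⊠ (g ⊠ h)) = ((f ⊠ g) ⊠ h) ∘ assocI X Y Z.
Proof.
  transitivity (assocI X' Y' Z' ∘ (f ⊠ (g ⊠ h)) ∘ (assoc X Y Z ∘ assocI X Y Z)).
  - rewrite assoc_inv2, comp_idr; reflexivity.
  - rewrite !comp_assoc, <- (comp_assoc _ _ (assocI X' Y' Z')), <- assoc_nat,
      !comp_assoc, assoc_inv1, comp_idl; reflexivity.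
Qed.

Lemma keyK (V : C) :
  ((runitI V ∘ (idm V ⊠ counit H)) ⊠ idm Hc) ∘ assocI V Hc Hc ∘ (idm V ⊠ comul H)
  = idm (V ⊗ Hc).
Proof.
  assert (E1 : (runitI V ∘ (idm V ⊠ counit H)) ⊠ idm Hc
     = (runitI V ⊠ idm Hc) ∘ ((idm V ⊠ counit H) ⊠ idm Hc)).
  { rewrite <- tensm_comp, comp_idl; reflexivity. }
  rewrite E1, <- !comp_assoc.
  rewrite (comp_assoc (idm V ⊠ comul H)), <- assocI_nat.
  rewrite <- comp_assoc, <- tensm_comp, comp_idl, counit_l.
  rewrite <- triangle, (comp_assoc (runit V ⊠ idm Hc)), assoc_inv1, comp_idl.
  rewrite <- tensm_comp, runit_inv1, comp_idl, tensm_id; reflexivity.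
Qed.

Lemma epi_tens (Hpres : tensor_preserves_pushouts C) (Y A B : C) (e : hom A B) :
  epi e -> epi (idm Y ⊠ e).
Proof.
  intros He.
  assert (P : is_pushout e e (idm B) (idm B)).
  { split; [reflexivity|]. intros Z u v E. pose proof (He _ _ _ E) as Euv; subst v.
    exists u. split; [split; apply comp_idr|].
    intros h [E1 _]; rewrite comp_idr in E1; auto. }
  destruct (Hpres Y _ _ _ _ _ _ _ _ P) as [_ P2].
  intros Z u v E.
  destruct P2 as [_ U]. destruct (U Z u v E) as [h [[E1 E2] _]].
  rewrite tensm_id, comp_idr in E1, E2. congruence.
Qed.

End Main.
From Stdlib Require Import ssreflect.
Ltac nrm2 := repeat (rewrite -comp_assoc || rewrite comp_idl || rewrite comp_idr).
Ltac rw2 E := first [rewrite E | rewrite (ra2 E) | rewrite (ra1 E)]; nrm2.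
Section Main2.
Variable C : BraidedMonoidalCat.
Variable H : Coalgebra C.
Local Notation Hc := (carrier H).
Section Geo.
Variable PO : HasPushouts C.
Variable Hpres : tensor_preserves_pushouts C.
Variable Heps : epi (counit H).

Lemma triv_pdatum (V : C) : is_pdatum (triv H V).
Proof.
  unfold is_pdatum, epi; cbn. intros Z u v E.
  rewrite !comp_assoc in E.
  apply (epi_tens Hpres (Y:=V) Heps) in E.
  rewrite -(comp_idr u) -(comp_idr v) -(runit_inv1 V) !comp_assoc E.
  reflexivity.
Qed.

Lemma triv_geometric (V : C) : is_geometric PO (triv H V).
Proof.
  pose proof (triv_pdatum (V:=V)) as Hpi.
  set (D := triv H V) in *.
  assert (Hg : epi (idm V ⊠ counit H)) by exact (epi_tens Hpres (Y:=V) Heps).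
  assert (P1 : is_pushout (C:=C) (ppi D) (idm V ⊠ counit H) (bullet_eps PO D) (pi_eps PO D))
    by exact (po_spec _ _ _).
  assert (P2 : is_pushout (C:=C) (ppi D) (idm (V ⊗ Hc)) (rho_bullet PO D) (pi_XH PO D)).
  { rewrite -tensm_id. exact (po_spec _ _ _). }
  assert (P3 : is_pushout (C:=C) (ppi D) (idm V ⊠ comul H) (bullet_Delta PO D) (pi_Delta PO D))
    by exact (po_spec _ _ _).
  assert (P4 : is_pushout (C:=C) (pi_Delta PO D) ((ppi D ⊠ idm Hc) ∘ assocI V Hc Hc)
                 (pi' PO D) (pi'_Delta PO D))
    by exact (po_spec _ _ _).
  assert (P5 : is_pushout (C:=C) (pi_XH PO D) (pi'_Delta PO D) (theta1 PO D) (theta2 PO D))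
    by exact (po_spec _ _ _).
  assert (K : (ppi D ⊠ idm Hc) ∘ assocI V Hc Hc ∘ (idm V ⊠ comul H) = idm (V ⊗ Hc))
    by exact (keyK H V).
  assert (Epi : ppi D = runitI V ∘ (idm V ⊠ counit H)) by reflexivity.
  change (prho D) with (idm V) in *.
  change (pX D) with V in *. change (pXH D) with V in *.
  pose proof (proj1 P1) as S1. pose proof (proj1 P2) as S2.
  pose proof (proj1 P3) as S3. pose proof (proj1 P4) as S4. pose proof (proj1 P5) as S5.
  rewrite comp_idr in S2.
  assert (K' := K). rewrite -comp_assoc in K'.
  assert (Ebe : bullet_eps PO D ∘ runitI V = pi_eps PO D).
  { apply Hg. rewrite -comp_assoc. exact S1. }
  destruct (po_ex (u:=idm V) (v:=runitI V) P1) as [h [Hh1 Hh2]].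
  { rewrite comp_idl; exact Epi. }
  assert (Hbh : bullet_eps PO D ∘ h = idm _).
  { apply (po_uniq P1); nrm2.
    - rw2 Hh1. reflexivity.
    - rw2 Hh2. exact Ebe. }
  split; [split; [split|]|].
  - exists (runit V ∘ h). split.
    + nrm2. rw2 Hh2. apply runit_inv2.
    + rewrite -Ebe. nrm2. rewrite (comp_assoc h (runit V) (runitI V)) runit_inv1. nrm2. exact Hbh.
  - rewrite -Ebe. nrm2. rewrite runit_inv1. nrm2. reflexivity.
  - apply Hpi. nrm2. rw2 S2. rw2 S3. rw2 S4. rw2 K'. exact S5.
  - destruct (po_ex (u:=rho_bullet PO D) (v:=pi_XH PO D ∘ ((ppi D ⊠ idm Hc) ∘ assocI V Hc Hc)) P3)
      as [u [Hu1 Hu2]].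
    { nrm2. rw2 K'. exact S2. }
    destruct (po_ex (u:=u) (v:=pi_XH PO D) P4) as [t [Ht1 Ht2]].
    { exact Hu2. }
    destruct (po_ex (u:=pi' PO D ∘ bullet_Delta PO D) (v:=pi'_Delta PO D) P2) as [p [Hp1 Hp2]].
    { nrm2. rw2 S3. rw2 S4. rw2 K'. reflexivity. }
    exists t. split; [exact Ht2|]. exists p. split.
    + apply (po_uniq P4); nrm2.
      * rw2 Ht1. apply (po_uniq P3); nrm2.
        -- rw2 Hu1. exact Hp1.
        -- rw2 Hu2. rw2 Hp2. symmetry. exact S4.
      * rw2 Ht2. exact Hp2.
    + apply (po_uniq P2); nrm2.
      * rw2 Hp1. rw2 Ht1. exact Hu1.
      * rw2 Hp2. exact Ht2.
Qed.
End Geo.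

Section Adj.
Variable PO : HasPushouts C.

Lemma quasi_of v (D : pquad H) : pvariant_pred PO v D -> is_quasi PO D.
Proof. destruct v; cbn; [auto | intros [Q _]; exact Q | intros [Q _]; exact Q]. Qed.

Lemma ext_exists v (D : pquad H) (HD : in_PMod PO v D) (B : C) (f : hom (pX D) B) :
  exists fH : hom (pXH D) B, is_pmorph (D:=D) (E:=triv H B) f fH.
Proof.
  destruct HD as [_ Hv]. destruct (quasi_of Hv) as [[[j [Hj1 Hj2]] Q1b] _].
  pose proof (proj1 (po_spec PO (ppi D) (idm (pX D) ⊠ counit H))) as S1.
  change (bullet_eps PO D ∘ ppi D = pi_eps PO D ∘ (idm (pX D) ⊠ counit H)) in S1.
  exists (f ∘ runitI (pX D) ∘ j ∘ bullet_eps PO D).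
  unfold is_pmorph; cbn [prho ppi triv]. split.
  - nrm2. rw2 Q1b. rw2 Hj1. rw2 runit_inv1. reflexivity.
  - nrm2. rw2 S1. rw2 Hj1.
    rewrite comp_assoc runitI_nat -comp_assoc -tensm_comp -tensm_comp. nrm2. reflexivity.
Qed.

Lemma ext_uniq (D : pquad H) (Hpi : is_pdatum D) (B : C) (f : hom (pX D) B)
  (fH fH' : hom (pXH D) B) :
  is_pmorph (D:=D) (E:=triv H B) f fH -> is_pmorph (D:=D) (E:=triv H B) f fH' -> fH = fH'.
Proof. intros [_ E1] [_ E2]. apply Hpi. rewrite E1 E2. reflexivity. Qed.

Lemma hom_triv_eq (D : pquad H) (Hpi : is_pdatum D) (B : C) (m n : pmod_hom D (triv H B)) :
  ph_f m = ph_f n -> m = n.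
Proof.
  intros E. destruct m as [f fH Hm], n as [g gH Hn]; cbn in *. subst g.
  apply pmod_hom_eq; cbn; [reflexivity|]. exact (ext_uniq Hpi Hm Hn).
Qed.

Definition phiA v (A : pmod_ob PO H v) (B : C) (f : hom (pX (proj1_sig A)) B)
  : pmod_hom (proj1_sig A) (triv H B) :=
  Build_pmod_hom (proj2_sig (constructive_indefinite_description _ (ext_exists (proj2_sig A) f))).
End Adj.
End Main2.

Unset Implicit Arguments.
Set Strict Implicit.

Theorem mainTheorem5
  (C : BraidedMonoidalCat) (PO : HasPushouts C)
  (Hpres : tensor_preserves_pushouts C)
  (H : Coalgebra C) (Heps : epi (counit H)) :
  (forall V : C, is_pdatum (triv H V) /\ is_geometric PO (triv H V)) /\
  (forall (v : pvariant) (hT : forall V : C, in_PMod PO v (triv H V)),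
      fully_faithful (trivT hT) /\ adjunction (forgetU PO H v) (trivT hT)).
Proof.
  split.
  - intros V. split; [exact (triv_pdatum (H:=H) Hpres Heps (V:=V)) | exact (triv_geometric (H:=H) PO Hpres Heps V)].
  - intros v hT. split.
    + intros A B. exists (fun m => ph_f m). split; [reflexivity|].
      intros y. apply pmod_hom_eq; [reflexivity|]. cbn.
      pose proof (proj1 (ph_spec y)) as E; cbn in E. rewrite comp_idl comp_idr in E. symmetry; exact E.
    + exists (fun A B f => phiA (PO:=PO) (v:=v) (B:=B) f). split.
      * intros A B. exists (fun m => ph_f m). split; [reflexivity|].
        intros m. apply hom_triv_eq; [exact (proj1 (proj2_sig A))|reflexivity].
      * intros A A' B B' h f g. apply hom_triv_eq; [exact (proj1 (proj2_sig A'))|reflexivity].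
Qed.
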